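(* Let $\mathbb{B}$ be a complete Boolean algebra and $\mathcal{M}=(D_0,D_1)$ a ${\tt D}\mathbb{B}$-valued model with $\mathcal{M}\models 3CA$. For $\alpha\in D_1^{(n)}$ let $I(\alpha):=\{\mathcal{X}:D_0^n\to\mathbb{B}_\Delta\mid \alpha\unlhd\mathcal{X}\}$ and $I^{(n)}:=\bigcup\{I(\alpha):\alpha\in D_1^{(n)}\}$, and let $\mathcal{N}=(D_0,I)$. Then (1) for every formula $F(X_1,\dots,X_k)$ (with individual constants from $D_0$), all $\alpha_i\in D_1^{(n_i)}$ and $\mathcal{X}_i\in I^{(n_i)}$ with $\alpha_i\unlhd\mathcal{X}_i$, we have $\mathcal{M}(F(\bar\alpha_1,\dots,\bar\alpha_k))\unlhd\mathcal{N}(F(\overline{\mathcal{X}_1},\dots,\overline{\mathcal{X}_k}))$; and (2) $\mathcal{N}\models 2CA$.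
   Context: For a cBa $\mathbb{B}$: ${\tt D}\mathbb{B}=\{(a,b):a\le b\}$, ${\tt a}=(\Box{\tt a},\Diamond{\tt a})$; ${\tt a}\unlhd{\tt b}$ iff $\Box{\tt a}\le\Box{\tt b}$ and $\Diamond{\tt a}\ge\Diamond{\tt b}$; $-{\tt a}=(-\Diamond{\tt a},-\Box{\tt a})$; $\sup_<,\inf_<$ componentwise; $\mathbb{B}_\Delta=\{(a,a):a\in\mathbb{B}\}\subseteq{\tt D}\mathbb{B}$; for functions $\alpha,\beta:D_0^n\to{\tt D}\mathbb{B}$, $\alpha\unlhd\beta$ pointwise. A ${\tt D}\mathbb{B}$-valued model $\mathcal{M}=(D_0,D_1)$: $D_0\ne\emptyset$, $D_1=\bigcup_{n\ge1}D_1^{(n)}$, $D_1^{(n)}$ a nonempty set of functions $D_0^n\to{\tt D}\mathbb{B}$; with constants for elements of $D_0$ and relation constants $\bar\alpha$, $\mathcal{M}(A)$ is defined by $\mathcal{M}(\bar\alpha(\vec t))=\alpha(\vec t)$, $\mathcal{M}(\lnot F)=-\mathcal{M}(F)$, $\lor,\land$ via $\sup_<,\inf_<$, $\exists x,\forall x$ via $\sup_<,\inf_<$ over $t\in D_0$, $\exists X^n,\forall X^n$ via $\sup_<,\inf_<$ over $\alpha\in D_1^{(n)}$, and $\mathcal{M}(\lambda\vec x.G)(\vec t)=\mathcal{M}(G(\vec t))$. $\mathcal{M}\models 3CA$: for every formula $G(x_1,\dots,x_n,X^k)$ and every $\beta\in D_1^{(k)}$ there is $\alpha\in D_1^{(n)}$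 with $\alpha\unlhd\mathcal{M}(\lambda\vec x.G(\vec x,\bar\beta))$. A $\mathbb{B}$-valued model is $\mathcal{N}=(D_0,I)$ with $I=\bigcup I^{(n)}$, $I^{(n)}$ a nonempty set of functions $D_0^n\to\mathbb{B}_\Delta$; $\mathcal{N}(A)$ is defined by the same clauses with $I^{(n)}$ in place of $D_1^{(n)}$, and its value lies in $\mathbb{B}_\Delta$, identified with $\mathbb{B}$. With $A\supset B:=\lnot A\lor B$, $A\leftrightarrow B:=(A\supset B)\land(B\supset A)$: $\mathcal{N}\models 2CA$ means that for each $n\ge1$ and each formula $G(x_1,\dots,x_n,X)$, $\mathcal{N}(\forall X\exists Y^n\forall x_1\cdots\forall x_n(Y(x_1,\dots,x_n)\leftrightarrow G(x_1,\dots,x_n,X)))=1$. *)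

(* Defs.v *)
(* Boolean algebras are mathcomp's ctbDistrLatticeType
   (complemented distributive lattices with top and bottom). *)
From HB Require Import structures.
From mathcomp Require Import all_boot all_order.
From Stdlib Require Import ClassicalEpsilon.
Set Implicit Arguments. Unset Strict Implicit. Unset Printing Implicit Defensive.
Import Order.Theory.
Local Open Scope order_scope.

Section Lattice.
Context {d : Order.disp_t} {B : ctbDistrLatticeType d}.

Definition is_lub (S : B -> Prop) (s : B) : Prop :=
  (forall x, S x -> x <= s) /\ (forall u, (forall x, S x -> x <= u) -> s <= u).

Definition complete_lattice : Prop := forall S : B -> Prop, exists s, is_lub S s.

(* the supremum (meaningful when B is complete) *)
Definition Bsup (S : B -> Prop) : B := epsilon (inhabits \bot) (fun s => is_lub S s).
Definition Binf (S : B -> Prop) : B := Bsup (fun u => forall x, S x -> u <= x).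

Definition supP {I : Type} (P : I -> Prop) (f : I -> B) : B :=
  Bsup (fun b => exists i, P i /\ b = f i).
Definition infP {I : Type} (P : I -> Prop) (f : I -> B) : B :=
  Binf (fun b => exists i, P i /\ b = f i).

(* elements of D B are represented as raw pairs p; p \in D B iff p.1 <= p.2 *)
Definition inDB (p : B * B) : Prop := p.1 <= p.2.
Definition inDelta (p : B * B) : Prop := p.1 = p.2.
(* a <| b  iff  Box a <= Box b  and  Diamond a >= Diamond b *)
Definition DBle (a b : B * B) : Prop := a.1 <= b.1 /\ b.2 <= a.2.
Definition DBneg (a : B * B) : B * B := (~` a.2, ~` a.1).
Definition DBjoin (a b : B * B) : B * B := (a.1 `|` b.1, a.2 `|` b.2).
Definition DBmeet (a b : B * B) : B * B := (a.1 `&` b.1, a.2 `&` b.2).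
Definition DBsupP {I : Type} (P : I -> Prop) (f : I -> B * B) : B * B :=
  (supP P (fun i => (f i).1), supP P (fun i => (f i).2)).
Definition DBinfP {I : Type} (P : I -> Prop) (f : I -> B * B) : B * B :=
  (infP P (fun i => (f i).1), infP P (fun i => (f i).2)).
End Lattice.

(* relation variables have arity n.+1 (arities are >= 1, as in the paper) *)
Inductive term (D0 : Type) : Type :=
| TVar (x : nat)
| TConst (c : D0).

Inductive form (D0 : Type) : Type :=
| Atom (n : nat) (X : nat) (ts : n.+1.-tuple (term D0))
| Not (F : form D0)
| Or (F G : form D0)
| And (F G : form D0)
| Ex1 (x : nat) (F : form D0)
| All1 (x : nat) (F : form D0)
| Ex2 (n : nat) (X : nat) (F : form D0)
| All2 (n : nat) (X : nat) (F : form D0).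

Arguments TVar {D0}.
Arguments Atom {D0}.
Arguments Ex1 {D0}. Arguments All1 {D0}. Arguments Ex2 {D0}. Arguments All2 {D0}.

Definition Imp {D0} (A C : form D0) : form D0 := Or (Not A) C.
Definition Iff {D0} (A C : form D0) : form D0 := And (Imp A C) (Imp C A).

Fixpoint free1 {D0} (F : form D0) (x : nat) : Prop :=
  match F with
  | Atom n _ ts => exists i : 'I_n.+1, tnth ts i = TVar x
  | Not F => free1 F x
  | Or F G | And F G => free1 F x \/ free1 G x
  | Ex1 y F | All1 y F => y <> x /\ free1 F x
  | Ex2 _ _ F | All2 _ _ F => free1 F x
  end.

Fixpoint free2 {D0} (F : form D0) (m Y : nat) : Prop :=
  match F with
  | Atom n X _ => n = m /\ X = Y
  | Not F => free2 F m Y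
  | Or F G | And F G => free2 F m Y \/ free2 G m Y
  | Ex1 _ F | All1 _ F => free2 F m Y
  | Ex2 n X F | All2 n X F => (n, X) <> (m, Y) /\ free2 F m Y
  end.

Section Semantics.
Context {d : Order.disp_t} {B : ctbDistrLatticeType d} {D0 : Type}.

Definition relB (n : nat) : Type := n.+1.-tuple D0 -> B * B.

Definition upd (e : nat -> D0) (x : nat) (t : D0) : nat -> D0 :=
  fun y => if y == x then t else e y.

Definition updl (e : nat -> D0) (xs : seq nat) (ts : seq D0) : nat -> D0 :=
  foldr (fun p e' => upd e' p.1 p.2) e (zip xs ts).

Definition upd2 (e : forall n, nat -> relB n) (n X : nat) (a : relB n) :
  forall m, nat -> relB m :=
  fun m Y => match PeanoNat.Nat.eq_dec n m with
             | left H => if Y == X then eq_rect n relB a m H else e m Y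
             | right _ => e m Y
             end.
Arguments upd2 e n X a : clear implicits.

Definition teval (e1 : nat -> D0) (t : term D0) : D0 :=
  match t with TVar x => e1 x | TConst c => c end.

(* Dom n = the admissible relations of arity n+1 (D_1^(n+1), resp. I^(n+1)) *)
Fixpoint eval (Dom : forall n, relB n -> Prop) (e1 : nat -> D0)
  (e2 : forall n, nat -> relB n) (F : form D0) : B * B :=
  match F with
  | Atom n X ts => e2 n X (map_tuple (teval e1) ts)
  | Not F => DBneg (eval Dom e1 e2 F)
  | Or F G => DBjoin (eval Dom e1 e2 F) (eval Dom e1 e2 G)
  | And F G => DBmeet (eval Dom e1 e2 F) (eval Dom e1 e2 G)
  | Ex1 x F => DBsupP (fun _ : D0 => True) (fun t => eval Dom (upd e1 x t) e2 F)
  | All1 x F => DBinfP (fun _ : D0 => True) (fun t => eval Dom (upd e1 x t) e2 F)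
  | Ex2 n X F => DBsupP (Dom n) (fun a => eval Dom e1 (upd2 e2 n X a) F)
  | All2 n X F => DBinfP (Dom n) (fun a => eval Dom e1 (upd2 e2 n X a) F)
  end.

Definition rle {n} (a b : relB n) : Prop := forall t, DBle (a t) (b t).

Definition CA3 (D1 : forall n, relB n -> Prop) : Prop :=
  forall (n k : nat) (xs : n.+1.-tuple nat) (X : nat) (G : form D0),
    uniq xs ->
    (forall x, free1 G x -> x \in xs) ->
    (forall m Y, free2 G m Y -> m = k /\ Y = X) ->
    forall beta : relB k, D1 k beta ->
    forall (e1 : nat -> D0) (e2 : forall n, nat -> relB n),
    exists alpha : relB n, D1 n alpha /\
      forall t : n.+1.-tuple D0,
        DBle (alpha t) (eval D1 (updl e1 xs t) (upd2 e2 k X beta) G).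

Definition Irel (D1 : forall n, relB n -> Prop) (n : nat) (Xr : relB n) : Prop :=
  (forall t, inDelta (Xr t)) /\ exists alpha, D1 n alpha /\ rle alpha Xr.


Definition CA2 (Dom : forall n, relB n -> Prop) : Prop :=
  forall (n k : nat) (xs : n.+1.-tuple nat) (X Y : nat) (G : form D0),
    uniq xs ->
    (forall x, free1 G x -> x \in xs) ->
    (forall m Z, free2 G m Z -> m = k /\ Z = X) ->
    (n, Y) <> (k, X) ->
    forall (e1 : nat -> D0) (e2 : forall n, nat -> relB n),
      eval Dom e1 e2
        (All2 k X (Ex2 n Y (foldr All1 (Iff (Atom n Y (map_tuple TVar xs)) G) xs)))
      = (\top, \top).
End Semantics.
Arguments Irel {d B D0} D1 n Xr.

(* Main.v *)
Require Import Defs.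
From HB Require Import structures.
From mathcomp Require Import all_boot all_order.
From Stdlib Require Import ClassicalEpsilon FunctionalExtensionality Eqdep_dec.
Set Implicit Arguments. Unset Strict Implicit. Unset Printing Implicit Defensive.
Import Order.Theory.
Local Open Scope order_scope.

Lemma Bsup_spec {d} {B : ctbDistrLatticeType d} (C : @complete_lattice d B)
  (S : B -> Prop) : is_lub S (Bsup S).
Proof.
rewrite /Bsup; have [s Hs] := C S.
exact: (epsilon_spec (inhabits \bot) (fun s => is_lub S s) (ex_intro _ s Hs)).
Qed.

Lemma supP_ub {d} {B : ctbDistrLatticeType d} (C : @complete_lattice d B)
  {I : Type} (P : I -> Prop) (f : I -> B) i : P i -> f i <= supP P f.
Proof. move=> Hi; apply: (proj1 (Bsup_spec C _)); by exists i. Qed.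

Lemma supP_le {d} {B : ctbDistrLatticeType d} (C : @complete_lattice d B)
  {I : Type} (P : I -> Prop) (f : I -> B) u :
  (forall i, P i -> f i <= u) -> supP P f <= u.
Proof. move=> H; apply: (proj2 (Bsup_spec C _)) => x [j [Hj ->]]; exact: H. Qed.

Lemma infP_lb {d} {B : ctbDistrLatticeType d} (C : @complete_lattice d B)
  {I : Type} (P : I -> Prop) (f : I -> B) i : P i -> infP P f <= f i.
Proof.
move=> Hi; rewrite /infP /Binf; apply: (proj2 (Bsup_spec C _)) => u Hu.
apply: Hu; by exists i.
Qed.

Lemma infP_ge {d} {B : ctbDistrLatticeType d} (C : @complete_lattice d B)
  {I : Type} (P : I -> Prop) (f : I -> B) u :
  (forall i, P i -> u <= f i) -> u <= infP P f.
Proof.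
move=> H; rewrite /infP /Binf; apply: (proj1 (Bsup_spec C _)) => x [j [Hj ->]].
exact: H.
Qed.

Lemma supP_ext {d} {B : ctbDistrLatticeType d} (C : @complete_lattice d B)
  {I : Type} (P : I -> Prop) (f g : I -> B) :
  (forall i, P i -> f i = g i) -> supP P f = supP P g.
Proof.
move=> H; apply/le_anti/andP; split; apply: (supP_le C) => i Hi.
  by rewrite H //; apply: (supP_ub C).
by rewrite -H //; apply: (supP_ub C).
Qed.

Lemma infP_ext {d} {B : ctbDistrLatticeType d} (C : @complete_lattice d B)
  {I : Type} (P : I -> Prop) (f g : I -> B) :
  (forall i, P i -> f i = g i) -> infP P f = infP P g.
Proof.
move=> H; apply/le_anti/andP; split; apply: (infP_ge C) => i Hi.
  by rewrite -H //; apply: (infP_lb C).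
by rewrite H //; apply: (infP_lb C).
Qed.

Lemma infP_top {d} {B : ctbDistrLatticeType d} (C : @complete_lattice d B)
  {I : Type} (P : I -> Prop) (f : I -> B) :
  (forall i, P i -> f i = \top) -> infP P f = \top.
Proof.
move=> H; apply/le_anti/andP; split; first exact: lex1.
by apply: (infP_ge C) => i Hi; rewrite H.
Qed.

Lemma upd2_same {d} {B : ctbDistrLatticeType d} {D0 : Type}
  (e : forall n, nat -> @relB d B D0 n) n X a : @upd2 _ _ _ e n X a n X = a.
Proof.
rewrite /upd2; case: PeanoNat.Nat.eq_dec => [H|H]; last by case: H.
by rewrite eqxx (UIP_refl_nat _ H).
Qed.

Lemma upd2_other {d} {B : ctbDistrLatticeType d} {D0 : Type}
  (e : forall n, nat -> @relB d B D0 n) n X a m Y :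
  (n, X) <> (m, Y) -> @upd2 _ _ _ e n X a m Y = e m Y.
Proof.
move=> ne; rewrite /upd2; case: PeanoNat.Nat.eq_dec => [H|H] //.
subst m; case: eqP => // HY; subst; by case: ne.
Qed.

Lemma DBle_trans {d} {B : ctbDistrLatticeType d} (a b c : B * B) :
  DBle a b -> DBle b c -> DBle a c.
Proof. move=> [h1 h2] [h3 h4]; split; [exact: le_trans h1 h3 | exact: le_trans h4 h2]. Qed.

Lemma part1 {d} {B : ctbDistrLatticeType d} {D0 : Type}
  (D1 : forall n, @relB d B D0 n -> Prop) (C : @complete_lattice d B)
  (hD : forall n a, D1 n a -> forall t, inDB (a t)) (F : form D0) :
  forall eM eN e1,
  (forall n X, free2 F n X -> Irel D1 n (eN n X) /\ rle (eM n X) (eN n X)) ->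
  DBle (eval D1 e1 eM F) (eval (Irel D1) e1 eN F).
Proof.
have ext : forall n (a : relB n), D1 n a ->
    Irel D1 n (fun t => ((a t).1, (a t).1)) /\ rle a (fun t => ((a t).1, (a t).1)).
  move=> n a Ha; split; last by move=> t; split => //=; exact: hD.
  split => //; exists a; split => // t; split => //=; exact: hD.
have env : forall (F : form D0) (n X : nat) (eM eN : forall n, nat -> relB n) (a Xr : relB n),
   (forall m Y, free2 (Ex2 n X F) m Y -> Irel D1 m (eN m Y) /\ rle (eM m Y) (eN m Y)) ->
   Irel D1 n Xr -> rle a Xr ->
   forall m Y, free2 F m Y -> Irel D1 m (@upd2 _ _ _ eN n X Xr m Y) /\
                               rle (@upd2 _ _ _ eM n X a m Y) (@upd2 _ _ _ eN n X Xr m Y).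
  move=> F0 n X eM eN a Xr H HX Hr m Y hf.
  case: (eqVneq (n, X) (m, Y)) => [[<- <-]|/eqP ne].
    by rewrite !upd2_same.
  rewrite !upd2_other //; apply: H; by split.
elim: F => [n X ts|F IH|F IHF G IHG|F IHF G IHG|x F IH|x F IH|n X F IH|n X F IH]
  eM eN e1 H /=.
- by have [_ Hr] := H n X (conj erefl erefl).
- have [h1 h2] := IH eM eN e1 H; by split; rewrite /= leC.
- have [a1 a2] := IHF eM eN e1 (fun n X h => H n X (or_introl h)).
  have [b1 b2] := IHG eM eN e1 (fun n X h => H n X (or_intror h)).
  split; exact: leU2.
- have [a1 a2] := IHF eM eN e1 (fun n X h => H n X (or_introl h)).
  have [b1 b2] := IHG eM eN e1 (fun n X h => H n X (or_intror h)).
  split; exact: leI2.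
- have Hk t := IH eM eN (upd e1 x t) H.
  split => /=; apply: (supP_le C) => t _.
    exact: le_trans (proj1 (Hk t)) (@supP_ub _ _ C _ _ _ t I).
  exact: le_trans (proj2 (Hk t)) (@supP_ub _ _ C _ _ _ t I).
- have Hk t := IH eM eN (upd e1 x t) H.
  split => /=; apply: (infP_ge C) => t _.
    exact: le_trans (@infP_lb _ _ C _ _ _ t I) (proj1 (Hk t)).
  exact: le_trans (@infP_lb _ _ C _ _ _ t I) (proj2 (Hk t)).
- split => /=.
    apply: (supP_le C) => a Ha; have [HX Hr] := ext n a Ha.
    have [k1 _] := IH _ _ e1 (env F n X eM eN _ _ H HX Hr).
    exact: le_trans k1 (@supP_ub _ _ C _ _ _ _ HX).
  apply: (supP_le C) => Xr HX; have [_ [a [Ha Hr]]] := HX.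
  have [_ k2] := IH _ _ e1 (env F n X eM eN _ _ H HX Hr).
  exact: le_trans k2 (@supP_ub _ _ C _ _ _ a Ha).
- split => /=.
    apply: (infP_ge C) => Xr HX; have [_ [a [Ha Hr]]] := HX.
    have [k1 _] := IH _ _ e1 (env F n X eM eN _ _ H HX Hr).
    exact: le_trans (@infP_lb _ _ C _ _ _ a Ha) k1.
  apply: (infP_ge C) => a Ha; have [HX Hr] := ext n a Ha.
  have [_ k2] := IH _ _ e1 (env F n X eM eN _ _ H HX Hr).
  exact: le_trans (@infP_lb _ _ C _ _ _ _ HX) k2.
Qed.

Lemma eval_ext {d} {B : ctbDistrLatticeType d} {D0 : Type}
  (Dom : forall n, @relB d B D0 n -> Prop) (F : form D0) :
  forall e1 e1' (e2 e2' : forall n, nat -> relB n),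
  (forall x, free1 F x -> e1 x = e1' x) ->
  (forall m Y, free2 F m Y -> e2 m Y = e2' m Y) ->
  eval Dom e1 e2 F = eval Dom e1' e2' F.
Proof.
elim: F => [n X ts|F IH|F IHF G IHG|F IHF G IHG|x F IH|x F IH|n X F IH|n X F IH]
  e1 e1' e2 e2' H1 H2 /=.
- rewrite H2; last by split.
  congr (e2' n X _); apply: eq_from_tnth => i; rewrite !tnth_map.
  case E: (tnth ts i) => [y|c] //=; apply: H1; by exists i.
- by rewrite (IH e1 e1' e2 e2').
- rewrite (IHF e1 e1' e2 e2') ?(IHG e1 e1' e2 e2') // => *;
    (apply: H1 || apply: H2); by [left|right].
- rewrite (IHF e1 e1' e2 e2') ?(IHG e1 e1' e2 e2') // => *;
    (apply: H1 || apply: H2); by [left|right].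
- have -> : (fun t => eval Dom (upd e1 x t) e2 F) = (fun t => eval Dom (upd e1' x t) e2' F) => //.
  apply: functional_extensionality => t; apply: IH => // y hy.
  rewrite /upd; case: eqP => // ne; apply: H1; split => // e; by apply: ne.
- have -> : (fun t => eval Dom (upd e1 x t) e2 F) = (fun t => eval Dom (upd e1' x t) e2' F) => //.
  apply: functional_extensionality => t; apply: IH => // y hy.
  rewrite /upd; case: eqP => // ne; apply: H1; split => // e; by apply: ne.
- have -> : (fun a => eval Dom e1 (@upd2 _ _ _ e2 n X a) F) =
            (fun a => eval Dom e1' (@upd2 _ _ _ e2' n X a) F) => //.
  apply: functional_extensionality => a; apply: IH => // m Y hf.
  case: (eqVneq (n, X) (m, Y)) => [[<- <-]|/eqP ne]; first by rewrite !upd2_same.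
  rewrite !upd2_other //; apply: H2; by split.
- have -> : (fun a => eval Dom e1 (@upd2 _ _ _ e2 n X a) F) =
            (fun a => eval Dom e1' (@upd2 _ _ _ e2' n X a) F) => //.
  apply: functional_extensionality => a; apply: IH => // m Y hf.
  case: (eqVneq (n, X) (m, Y)) => [[<- <-]|/eqP ne]; first by rewrite !upd2_same.
  rewrite !upd2_other //; apply: H2; by split.
Qed.

Lemma eval_delta {d} {B : ctbDistrLatticeType d} {D0 : Type}
  (D1 : forall n, @relB d B D0 n -> Prop) (C : @complete_lattice d B) (F : form D0) :
  forall e1 (e2 : forall n, nat -> relB n),
  (forall m Y, free2 F m Y -> forall t, inDelta (e2 m Y t)) ->
  inDelta (eval (Irel D1) e1 e2 F).
Proof.
rewrite /inDelta.
elim: F => [n X ts|F IH|F IHF G IHG|F IHF G IHG|x F IH|x F IH|n X F IH|n X F IH]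
  e1 e2 H /=.
- by apply: H.
- by rewrite (IH e1 e2).
- rewrite (IHF e1 e2) ?(IHG e1 e2) // => *; apply: H; by [left|right].
- rewrite (IHF e1 e2) ?(IHG e1 e2) // => *; apply: H; by [left|right].
- by apply: (supP_ext C) => t _; rewrite (IH _ e2).
- by apply: (infP_ext C) => t _; rewrite (IH _ e2).
- apply: (supP_ext C) => a Ha; rewrite (IH _ _) // => m Y hf.
  case: (eqVneq (n, X) (m, Y)) => [[<- <-]|/eqP ne] t; first by rewrite !upd2_same; apply: (proj1 Ha).
  rewrite !upd2_other //; apply: H; by split.
- apply: (infP_ext C) => a Ha; rewrite (IH _ _) // => m Y hf.
  case: (eqVneq (n, X) (m, Y)) => [[<- <-]|/eqP ne] t; first by rewrite !upd2_same; apply: (proj1 Ha).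
  rewrite !upd2_other //; apply: H; by split.
Qed.

Lemma updl_map {D0 : Type} (e : nat -> D0) (f : nat -> D0) (xs : seq nat) x :
  x \in xs -> updl e xs (map f xs) x = f x.
Proof.
elim: xs => //= y xs IH Hx; rewrite {1}/updl /= {1}/upd; case: (eqVneq x y) => [->//|ne].
apply: IH; move: Hx; by rewrite in_cons (negbTE ne).
Qed.

Lemma foldr_All1_top {d} {B : ctbDistrLatticeType d} {D0 : Type}
  (C : @complete_lattice d B)
  (Dom : forall n, @relB d B D0 n -> Prop) e2 body (l : seq nat) :
  (forall e1, eval Dom e1 e2 body = (\top, \top)) ->
  forall e1, eval Dom e1 e2 (foldr All1 body l) = (\top, \top).
Proof.
move=> H; elim: l => //= x l IH e1.
by rewrite /DBinfP !(infP_top C) // => t _; rewrite IH.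
Qed.

Theorem mainTheorem6 (d : Order.disp_t) (B : ctbDistrLatticeType d) (D0 : Type)
  (D1 : forall n : nat, @relB d B D0 n -> Prop) :
  @complete_lattice d B ->
  inhabited D0 ->
  (forall n, exists a, D1 n a) ->
  (forall n (a : relB n), D1 n a -> forall t, inDB (a t)) ->
  CA3 D1 ->
  (forall (F : form D0) (eM eN : forall n, nat -> relB n) (e1 : nat -> D0),
      (forall x, ~ free1 F x) ->
      (forall n X, free2 F n X ->
         D1 n (eM n X) /\ Irel D1 n (eN n X) /\ rle (eM n X) (eN n X)) ->
      DBle (eval D1 e1 eM F) (eval (Irel D1) e1 eN F))
  /\ CA2 (Irel D1).
Proof.
move=> C _ _ hD H3; split.
  move=> F eM eN e1 _ H; apply: (part1 C hD) => n X hf.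
  by have [_ [? ?]] := H n X hf.
move=> n k xs X Y G Hu Hf1 Hf2 Hne e1 e2 /=.
suff claim : forall beta, Irel D1 k beta ->
  eval (Irel D1) e1 (@upd2 _ _ _ e2 k X beta)
    (Ex2 n Y (foldr All1 (Iff (Atom n Y (map_tuple TVar xs)) G) xs)) = (\top, \top).
  rewrite /DBinfP !(infP_top C) // => b Hb /=;
    by have := claim b Hb; rewrite /= /DBsupP => -[E1 E2]; rewrite ?E1 ?E2.
move=> beta Hb.
set e2b := @upd2 _ _ _ e2 k X beta.
pose Yrel : relB n := fun t => eval (Irel D1) (updl e1 xs t) e2b G.
have HY : Irel D1 n Yrel.
  split.
    move=> t; rewrite /Yrel; apply: (@eval_delta _ _ _ D1 C) => m Z hf.
    have [-> ->] := Hf2 _ _ hf; rewrite /e2b upd2_same; exact: (proj1 Hb).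
  have [_ [beta' [Hb' Hr]]] := Hb.
  have [alpha [Ha Hal]] := H3 n k xs X G Hu Hf1 Hf2 beta' Hb' e1 e2.
  exists alpha; split => // t; apply: DBle_trans (Hal t) _.
  apply: (part1 C hD) => m Z hf; have [-> ->] := Hf2 _ _ hf.
  by rewrite /e2b !upd2_same.
have body : forall e1', eval (Irel D1) e1' (@upd2 _ _ _ e2b n Y Yrel)
     (Iff (Atom n Y (map_tuple TVar xs)) G) = (\top, \top).
  move=> e1'.
  have hG : forall m Z, free2 G m Z -> e2b m Z = @upd2 _ _ _ e2b n Y Yrel m Z.
    move=> m Z hf; have [-> ->] := Hf2 _ _ hf; by rewrite upd2_other.
  have HA : @upd2 _ _ _ e2b n Y Yrel n Y (map_tuple (teval e1') (map_tuple TVar xs))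
            = eval (Irel D1) e1' (@upd2 _ _ _ e2b n Y Yrel) G.
    rewrite upd2_same /Yrel; apply: eval_ext => // x hx /=.
    rewrite -map_comp; exact: updl_map (Hf1 x hx).
  have HD : inDelta (eval (Irel D1) e1' (@upd2 _ _ _ e2b n Y Yrel) G).
    apply: (@eval_delta _ _ _ D1 C) => m Z hf; rewrite -hG //.
    have [-> ->] := Hf2 _ _ hf; rewrite /e2b upd2_same; exact: (proj1 Hb).
  rewrite /Iff /Imp /= HA.
  move: HD; case: (eval _ _ _ G) => a b; rewrite /inDelta /= => <-.
  by rewrite /DBmeet /DBjoin /DBneg /= joinCx meetxx.
rewrite /= /DBsupP.
have Htop := foldr_All1_top C (Dom := Irel D1) xs body e1.
congr pair; apply/le_anti/andP; (split; first exact: lex1).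
  by apply: le_trans (@supP_ub _ _ C _ _ _ Yrel HY); rewrite Htop.
by apply: le_trans (@supP_ub _ _ C _ _ _ Yrel HY); rewrite Htop.
Qed.
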